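(* Let $A$ be a synaptic algebra and let $p,q\in P$ be in generic position ($p\wedge q=p\wedge q^{\perp}=p^{\perp}\wedge q=p^{\perp}\wedge q^{\perp}=0$). Let $c:=(pqp+p^{\perp}q^{\perp}p^{\perp})^{1/2}$, $s:=(pq^{\perp}p+p^{\perp}qp^{\perp})^{1/2}$, let $u$ be the symmetry of the polar decomposition of $p-q^{\perp}$ (so $p-q^{\perp}=cu=uc$) and $v$ the symmetry of the polar decomposition of $p-q$ (so $p-q=sv=vs$), and put $j:=uvp+pvu$ and $\ell:=2p-1$. Then: (i) $j$ is a symmetry in $A$ exchanging $p$ and $p^{\perp}$, i.e. $jpj=p^{\perp}$; (ii) $j$ commutes with both $s$ and $c$; (iii) $j=pj+jp$; (iv) $\ell=2p-1=p-p^{\perp}=cu+sv$ is a symmetry that commutes with $p$, $c$ and $s$.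
   Context: Synaptic algebra (Foulis): $R$ is a real linear associative algebra with unit $1$, and $A\subseteq R$ is a real linear subspace with $1\in A$. For $a,b\in A$ write $aCb$ iff $ab=ba$; $C(a):=\{b\in A: aCb\}$; $CC(a):=\{b\in A: bCd \text{ for all } d\in C(a)\}$. $A$ is a synaptic algebra with enveloping algebra $R$ iff: (SA1) $A$ is a partially ordered archimedean real linear space with positive cone $A^+$, $1$ is an order unit, $\|\cdot\|$ the order-unit norm; (SA2) $a\in A\Rightarrow a^2\in A^+$; (SA3) $a,b\in A^+\Rightarrow aba\in A^+$; (SA4) if $a\in A$, $b\in A^+$, $aba=0$ then $ab=ba=0$; (SA5) if $a\in A^+$ there is $b\in A^+\cap CC(a)$ with $b^2=a$; (SA6) for $a\in A$ there is $p=p^2\in A$ with $ab=0\Leftrightarrow pb=0$ for all $b\in A$; (SA7) if $1\le a$ there is $b\in A$ with $ab=ba=1$; (SA8) if $a,b\in A$, $a_1\le a_2\le\cdots$ are pairwise commuting elements of $C(b)$ with $\|a-a_n\|\to0$, then $a\in C(b)$. $A$ is nondegenerate ($1\neq0$). Products are computed in $R$. $P:=\{p\in A:p=p^2\}$ with inherited order is an orthomodular lattice with $p^{\perp}:=1-p$, meet $\wedge$, join $\vee$. For $0\le a$, $a^{1/2}$ is its unique positive square root in $A$, $|a|:=(a^2)^{1/2}$; $a^{\circ}$ is the carrier of $a$ (the unique projection with $ab=0\Leftrightarrow a^{\circ}b=0$ for all $b\in A$). A symmetry is $u\in A$ with $u^2=1$. For $a\in A$, the signum $t$ of $a$ is the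 partial symmetry with $t^2=a^{\circ}$, $t\in CC(a)$, $a=|a|t=t|a|$; the symmetry of the polar decomposition of $a$ is $t+(a^{\circ})^{\perp}$, a symmetry in $CC(a)$ with $a=|a|u=u|a|$. A symmetry $w$ exchanges projections $x,y$ iff $wxw=y$. *)

(* Defs.v *)
From HB Require Import structures.
From mathcomp Require Import all_boot all_order all_algebra.
From mathcomp Require Import reals.
Set Implicit Arguments.
Unset Strict Implicit.
Unset Printing Implicit Defensive.
Import Order.TTheory GRing.Theory Num.Theory.
Local Open Scope ring_scope.

Section Synaptic.
Variables (K : realType) (R : algType K).
(* [A] : the subspace A of the enveloping algebra R; [pos] : the cone A^+. *)
Variables (A pos : R -> Prop).

Definition sle (a b : R) : Prop := pos (b - a).

Definition commutes (a b : R) : Prop := a * b = b * a.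

Definition inC (a b : R) : Prop := A b /\ commutes a b.

Definition inCC (a b : R) : Prop :=
  A b /\ forall d, inC a d -> commutes b d.

(* order-unit norm: ||x|| <= r  iff  -r.1 <= x <= r.1 (||x|| is the infimum of such r >= 0) *)
Definition ounorm_le (x : R) (r : K) : Prop :=
  sle (- (r *: 1)) x /\ sle x (r *: 1).

Definition ounorm_cvg (an : nat -> R) (a : R) : Prop :=
  forall eps : K, 0 < eps -> exists N : nat, forall n, (N <= n)%N ->
    ounorm_le (a - an n) eps.

Record synaptic_algebra : Prop := SynapticAlgebra {
  sa_sub0 : A 0;
  sa_subD : forall a b, A a -> A b -> A (a + b);
  sa_subZ : forall (k : K) a, A a -> A (k *: a);
  sa_sub1 : A 1;
  sa_pos_sub : forall a, pos a -> A a;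
  sa_pos0 : pos 0;
  sa_posD : forall a b, pos a -> pos b -> pos (a + b);
  sa_posZ : forall (k : K) a, 0 <= k -> pos a -> pos (k *: a);
  sa_pos_antisym : forall a, pos a -> pos (- a) -> a = 0;
  sa_archimedean : forall a b, A a -> A b ->
    (forall n : nat, sle (a *+ n) b) -> sle a 0;
  sa_order_unit : forall a, A a -> exists n : nat, sle a (1 *+ n);
  sa_sq_pos : forall a, A a -> pos (a * a);
  sa_aba_pos : forall a b, pos a -> pos b -> pos (a * b * a);
  sa_aba0 : forall a b, A a -> pos b -> a * b * a = 0 -> a * b = 0 /\ b * a = 0;
  sa_sqrt : forall a, pos a -> exists b, pos b /\ inCC a b /\ b * b = a;
  sa_carrier : forall a, A a -> exists p, A p /\ p * p = p /\
    (forall b, A b -> (a * b = 0 <-> p * b = 0));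
  sa_inv : forall a, sle 1 a -> exists b, A b /\ a * b = 1 /\ b * a = 1;
  sa_cvg_comm : forall (a b : R) (an : nat -> R), A a -> A b ->
    (forall n, inC b (an n)) ->
    (forall n, sle (an n) (an n.+1)) ->
    (forall m n, commutes (an m) (an n)) ->
    ounorm_cvg an a -> inC b a;
  sa_nondeg : (1 : R) != 0
}.

Definition proj (p : R) : Prop := A p /\ p * p = p.

Definition is_meetP (p q m : R) : Prop :=
  proj m /\ sle m p /\ sle m q /\
  forall r, proj r -> sle r p -> sle r q -> sle r m.

Definition generic_position (p q : R) : Prop :=
  is_meetP p q 0 /\ is_meetP p (1 - q) 0 /\
  is_meetP (1 - p) q 0 /\ is_meetP (1 - p) (1 - q) 0.

Definition is_sqrt (a x : R) : Prop := pos x /\ x * x = a.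

Definition is_abs (a x : R) : Prop := is_sqrt (a * a) x.

Definition is_carrier (a o : R) : Prop :=
  proj o /\ forall b, A b -> (a * b = 0 <-> o * b = 0).

Definition is_signum (a t : R) : Prop :=
  A t /\ inCC a t /\
  (exists o, is_carrier a o /\ t * t = o) /\
  (exists x, is_abs a x /\ a = x * t /\ a = t * x).

Definition is_polar_symmetry (a u : R) : Prop :=
  exists t o, is_signum a t /\ is_carrier a o /\ u = t + (1 - o).

Definition symmetry (u : R) : Prop := A u /\ u * u = 1.

End Synaptic.

(* Main.v *)
From Stdlib Require Ncring Ncring_tac.
Require Import Defs.
From HB Require Import structures.
From mathcomp Require Import all_boot all_order all_algebra.
From mathcomp Require Import reals.
Import Order.TTheory GRing.Theory Num.Theory.
Local Open Scope ring_scope.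
Set Implicit Arguments.
Unset Strict Implicit.

Global Instance Rops (R : pzRingType) : @Ncring.Ring_ops R 0%R 1%R (@GRing.add R) (@GRing.mul R) (fun x y => x - y)%R (@GRing.opp R) (@eq R) := {}.
Global Instance Rring (R : pzRingType) : @Ncring.Ring R _ _ _ _ _ _ _ (Rops R).
Proof.
constructor.
- by constructor; [move=> ? | move=> ? ? -> | move=> ? ? ? -> ->].
- by move=> ? ? -> ? ? ->.
- by move=> ? ? -> ? ? ->.
- by move=> ? ? -> ? ? ->.
- by move=> ? ? ->.
- exact: add0r.
- exact: addrC.
- exact: addrA.
- exact: mul1r.
- exact: mulr1.
- exact: mulrA.
- exact: mulrDl.
- move=> x y z; exact: mulrDr.
- by [].
- exact: subrr.
Qed.

Ltac ncr := Ncring_tac.non_commutative_ring.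
Ltac expand := repeat progress rewrite ?mulrDr ?mulrDl ?mulrBr ?mulrBl ?mulNr ?mulrN ?opprK ?mulr1 ?mul1r ?mulrA.

Ltac pqnorm pp qq pP qQ := expand; do 2 rewrite ?pp ?qq ?pP ?qQ; ncr.
Ltac csn r1 r2 r3 r4 r5 r6 r7 r8 r9 r10 r11 r12 r13 r14 r15 r16 r17 r18 :=
  repeat progress (expand; rewrite ?r1 ?r2 ?r3 ?r4 ?r5 ?r6 ?r7 ?r8 ?r9 ?r10 ?r11 ?r12 ?r13 ?r14 ?r15 ?r16 ?r17 ?r18); ncr.

Section SA.
Variables (K : realType) (R : algType K) (A pos : R -> Prop).
Hypothesis HA : synaptic_algebra A pos.




Lemma posA a : pos a -> A a. Proof. exact: (sa_pos_sub HA). Qed.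
Lemma A_N a : A a -> A (- a).
Proof. by move=> Ha; rewrite -scaleN1r; exact: (sa_subZ HA (-1) Ha). Qed.
Lemma A_D a b : A a -> A b -> A (a + b). Proof. by move=> Ha Hb; exact: (sa_subD HA Ha Hb). Qed.
Lemma A_B a b : A a -> A b -> A (a - b).
Proof. by move=> Ha Hb; apply: A_D => //; apply: A_N. Qed.
Lemma A_1 : A 1. Proof. exact: (sa_sub1 HA). Qed.
Lemma A_sq a : A a -> A (a * a).
Proof. by move=> Ha; apply: posA; apply: (sa_sq_pos HA). Qed.
Lemma A_jor a b : A a -> A b -> A (a * b + b * a).
Proof.
move=> Ha Hb.
have -> : a * b + b * a = (a + b) * (a + b) - a * a - b * b by ncr.
by apply: A_B; [apply: A_B|]; apply: A_sq => //; apply: A_D.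
Qed.
Lemma A_half x : A (x + x) -> A x.
Proof.
move=> H.
have -> : x = (2%:R)^-1 *: (x + x).
  rewrite -mulr2n -scaler_nat scalerA mulVf ?scale1r //.
  by rewrite pnatr_eq0.
exact: (sa_subZ HA _ H).
Qed.
Lemma A_mulC a b : A a -> A b -> commutes a b -> A (a * b).
Proof.
move=> Ha Hb Hc; apply: A_half.
by rewrite {2}Hc; apply: A_jor.
Qed.
Lemma A_triple a b : A a -> A b -> A (a * b * a).
Proof.
move=> Ha Hb; apply: A_half.
have -> : a * b * a + a * b * a =
  (a * (a * b + b * a) + (a * b + b * a) * a) - ((a * a) * b + b * (a * a)) by ncr.
apply: A_B; first by apply: A_jor => //; apply: A_jor.
by apply: A_jor => //; apply: A_sq.
Qed.

Lemma pos1 : pos 1.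
Proof. by rewrite -(mulr1 1); apply: (sa_sq_pos HA); apply: A_1. Qed.
Lemma proj_pos r : proj A r -> pos r.
Proof. by case=> Ha Hr; rewrite -Hr; apply: (sa_sq_pos HA). Qed.
Lemma sq_zero y : A y -> y * y = 0 -> y = 0.
Proof.
move=> Hy H.
have [] := sa_aba0 HA Hy pos1; first by rewrite mulr1.
by rewrite mulr1.
Qed.
Lemma pos_sum0 P Q : pos P -> pos Q -> P + Q = 0 -> P = 0.
Proof.
move=> HP HQ H; apply: (sa_pos_antisym HA) => //.
by have -> : - P = Q by rewrite -[Q](addKr P) H addr0.
Qed.


Lemma sandwich (r y : R) : commutes r y -> y * (r * r) * y = r * (y * y) * r.
Proof.
rewrite /commutes => H.
have -> : y * (r * r) * y = r * (y * y) * r + (y * r - r * y) * r * y + r * y * (r * y - y * r) by ncr.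
by rewrite H subrr !mul0r !mulr0 !addr0.
Qed.

Lemma root_eq x b : pos x -> pos b -> inCC A (x * x) b -> b * b = x * x -> x = b.
Proof.
move=> Hx Hb [Ab HbCC] Hbb.
have Ax := posA Hx.
have bx : b * x = x * b by apply: HbCC; split => //; rewrite /commutes mulrA.
have [r [Hr [[Ar HrCC] Hrr]]] := sa_sqrt HA Hx.
have [r' [Hr' [[Ar' HrCC'] Hrr']]] := sa_sqrt HA Hb.
have rx : commutes r x by apply: HrCC.
have rb : commutes r b by apply: HrCC; split => //; exact: esym bx.
have r'x : commutes r' x by apply: HrCC'.
have r'b : commutes r' b by apply: HrCC'.
have Ay : A (x - b) := A_B Ax Ab.
have ry : commutes r (x - b) by rewrite /commutes mulrBr mulrBl rx rb.
have r'y : commutes r' (x - b) by rewrite /commutes mulrBr mulrBl r'x r'b.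
have P1 : pos ((x - b) * x * (x - b)).
  by rewrite -{2}Hrr sandwich //; apply: (sa_aba_pos HA) => //; apply: (sa_sq_pos HA).
have P2 : pos ((x - b) * b * (x - b)).
  by rewrite -{2}Hrr' sandwich //; apply: (sa_aba_pos HA) => //; apply: (sa_sq_pos HA).
have S0 : (x - b) * x * (x - b) + (x - b) * b * (x - b) = 0.
  have -> : (x - b) * x * (x - b) + (x - b) * b * (x - b) =
    (x * x - b * b + (x * b - b * x)) * (x - b) by ncr.
  by rewrite Hbb bx !subrr addr0 mul0r.
have E1 := pos_sum0 P1 P2 S0.
have E2 : (x - b) * b * (x - b) = 0 by move: S0; rewrite E1 add0r.
have [yx _] := sa_aba0 HA Ay Hx E1.
have [yb _] := sa_aba0 HA Ay Hb E2.
apply/eqP; rewrite -subr_eq0; apply/eqP; apply: sq_zero Ay _.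
by rewrite mulrBr yx yb subrr.
Qed.

Lemma sqrt_comm x d : pos x -> A d -> commutes (x * x) d -> commutes x d.
Proof.
move=> Hx Ad H.
have [b [Hb [[Ab HbCC] Hbb]]] := sa_sqrt HA (sa_sq_pos HA (posA Hx)).
rewrite (root_eq Hx Hb (conj Ab HbCC) Hbb).
by apply: HbCC.
Qed.

Lemma sqrt_uniq x y : pos x -> pos y -> x * x = y * y -> x = y.
Proof.
move=> Hx Hy E.
have [b [Hb [[Ab HbCC] Hbb]]] := sa_sqrt HA (sa_sq_pos HA (posA Hx)).
rewrite (root_eq Hx Hb (conj Ab HbCC) Hbb).
apply: esym; apply: root_eq Hy Hb _ _; last by rewrite Hbb E.
by rewrite -E; split.
Qed.

Lemma car_props a o : A a -> is_carrier A a o ->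
  a * (1 - o) = 0 /\ (1 - o) * a = 0 /\ proj A (1 - o).
Proof.
move=> Aa [[Ao Hoo] Hc].
have Ae : A (1 - o) := A_B A_1 Ao.
have pe : proj A (1 - o).
  by split => //; rewrite mulrBr mulr1 mulrBl mul1r Hoo subrr subr0.
have ae : a * (1 - o) = 0 by apply/(Hc _ Ae); rewrite mulrBr mulr1 Hoo subrr.
split => //; split => //.
have := sa_aba0 HA Aa (proj_pos pe); rewrite ae mul0r.
by case/(_ erefl).
Qed.

Lemma car_uniq a o o' : A a -> is_carrier A a o -> is_carrier A a o' -> o = o'.
Proof.
move=> Aa Ho Ho'.
case: (Ho) => [[Ao Hoo] Hc]; case: (Ho') => [[Ao' Hoo'] Hc'].
have Ae : A (1 - o) := A_B A_1 Ao.
have Ae' : A (1 - o') := A_B A_1 Ao'.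
have [ae _] := car_props Aa Ho.
have [ae' _] := car_props Aa Ho'.
have h1 : o' * (1 - o) = 0 by apply/(Hc' _ Ae).
have h2 : o * (1 - o') = 0 by apply/(Hc _ Ae').
apply/eqP; rewrite -subr_eq0; apply/eqP; apply: sq_zero (A_B Ao Ao') _.
have -> : (o - o') * (o - o') =
  (o * o - o) + (o' * o' - o') + o * (1 - o') + o' * (1 - o) by ncr.
by rewrite Hoo Hoo' h1 h2 !subrr !addr0.
Qed.

Lemma car_comm (a o b : R) : A a -> is_carrier A a o -> A b -> commutes a b ->
  commutes (1 - o) b.
Proof.
move=> Aa Ho Ab ab.
have [ae [ea pe]] := car_props Aa Ho.
case: Ho => [[Ao Hoo] Hc].
have o1 : o = 1 - (1 - o) by rewrite opprB addrC subrK.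
move: ae ea pe o1; set e := 1 - o => ae ea [Ae ee] o1.
have AJ : A (b * e + e * b) := A_jor Ab Ae.
have h : o * (b * e + e * b) = 0.
  apply/(Hc _ AJ).
  by rewrite mulrDr !mulrA ab -(mulrA b) ae mulr0 mul0r addr0.
have bee : b * e = e * b * e.
  have : b * e + e * b - e * (b * e + e * b) = 0.
    by rewrite -{1}[b * e + e * b]mul1r -mulrBl -o1 h.
  have -> : b * e + e * b - e * (b * e + e * b) = b * e - e * b * e + (e * b - e * e * b) by ncr.
  by rewrite ee subrr addr0 => /eqP; rewrite subr_eq0 => /eqP.
have At : A (e * b * e) := A_triple Ae Ab.
have Ag : A (e * b + b * e - (e * b * e + e * b * e)) := A_B (A_jor Ae Ab) (A_D At At).
have g0 : e * b + b * e - (e * b * e + e * b * e) = 0.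
  apply: sq_zero Ag _.
  rewrite bee.
  have -> : (e * b + e * b * e - (e * b * e + e * b * e)) * (e * b + e * b * e - (e * b * e + e * b * e))
     = (e * b * e * b - e * b * (e * e) * b) + (e * b * (e * e) * b * e - e * b * e * b * e) by ncr.
  by rewrite ee !subrr addr0.
have eb : e * b = e * b * e.
  by apply/eqP; rewrite -subr_eq0; apply/eqP; rewrite -g0 bee; ncr.
by rewrite /commutes eb -bee.
Qed.

Lemma polar_fact a x u : A a -> pos x -> x * x = a * a -> is_polar_symmetry A pos a u ->
  [/\ A u, u * u = 1, a = x * u & a = u * x].
Proof.
move=> Aa Hx Hxx [t [o [[At [[_ HtCC] [[o' [Ho' Htt]] [x' [[Hx' Hxx'] [a1 a2]]]]]] [Ho ->]]]].
have oo' : o' = o := car_uniq Aa Ho' Ho.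
have xx' : x' = x by apply: sqrt_uniq Hx' Hx _; rewrite Hxx' Hxx.
move: Htt a1 a2; rewrite oo' xx' => Htt a1 a2.
have [ae [ea pe]] := car_props Aa Ho.
case: (Ho) => [[Ao Hoo] _].
have oe : o * (1 - o) = 0 by rewrite mulrBr mulr1 Hoo subrr.
move: ae ea pe oe; set e := 1 - o => ae ea pe oe.
have [Ae ee] := pe.
have te : commutes t e by apply: HtCC; split => //; rewrite /commutes ae ea.
have [t_e _] : t * e = 0 /\ e * t = 0.
  apply: (sa_aba0 HA At (proj_pos pe)).
  by rewrite -mulrA -te mulrA Htt oe.
have e_t : e * t = 0 by rewrite -te.
have xe : commutes x e.
  apply: sqrt_comm => //.
  by rewrite /commutes Hxx -mulrA ae mulr0 mulrA ea mul0r.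
have [x_e _] : x * e = 0 /\ e * x = 0.
  apply: (sa_aba0 HA (posA Hx) (proj_pos pe)).
  by rewrite -mulrA -xe mulrA Hxx -mulrA ae mulr0.
have e_x : e * x = 0 by rewrite -xe.
split.
- exact: A_D At Ae.
- by rewrite -/e mulrDr (mulrDl t e t) (mulrDl t e e) Htt t_e e_t ee addr0 add0r /e addrC subrK.
- by rewrite mulrDr x_e addr0.
- by rewrite mulrDl e_x addr0.
Qed.

Lemma comm_sym (x y : R) : commutes x y -> commutes y x.
Proof. by []. Qed.
Lemma comm_1 (x : R) : commutes x 1.
Proof. by rewrite /commutes mulr1 mul1r. Qed.
Lemma comm_D (x y z : R) : commutes x y -> commutes x z -> commutes x (y + z).
Proof. by rewrite /commutes => H1 H2; rewrite mulrDr mulrDl H1 H2. Qed.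
Lemma comm_B (x y z : R) : commutes x y -> commutes x z -> commutes x (y - z).
Proof. by rewrite /commutes => H1 H2; rewrite mulrBr mulrBl H1 H2. Qed.
Lemma comm_M (x y z : R) : commutes x y -> commutes x z -> commutes x (y * z).
Proof. by rewrite /commutes => H1 H2; rewrite mulrA H1 -mulrA H2 mulrA. Qed.
Lemma comm_sq (x y : R) : commutes x y -> commutes (x * x) y.
Proof. by move=> H; apply: comm_sym; apply: comm_M; apply: comm_sym. Qed.
Lemma comm_1m (x y : R) : commutes x y -> commutes (1 - x) y.
Proof. by move=> H; apply: comm_sym; apply: comm_B; [apply: comm_1 | apply: comm_sym]. Qed.

Lemma half_inj (x y : R) : x *+ 2 = y *+ 2 -> x = y.
Proof.
move/(congr1 (fun z => (2%:R : K)^-1 *: z)).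
by rewrite -!scaler_nat !scalerA mulVf ?pnatr_eq0 // !scale1r.
Qed.

Lemma sub_proj_pos (x e : R) : proj A x -> proj A e -> commutes e x -> pos (x - x * e).
Proof.
move=> [Ax xx] [Ae ee] ex.
have pe' : proj A (1 - e).
  by split; [apply: A_B => //; apply: A_1 | rewrite mulrBr mulr1 mulrBl mul1r ee subrr subr0].
have -> : x - x * e = x * (1 - e) * x.
  have -> : x * (1 - e) * x = x * x - x * (e * x) by ncr.
  by rewrite ex mulrA xx.
by apply: (sa_aba_pos HA); apply: proj_pos.
Qed.

Lemma meet_zero (x y e : R) : is_meetP A pos x y 0 -> proj A x -> proj A y -> proj A e ->
  commutes e x -> commutes e y -> x * e = y * e -> x * e = 0.
Proof.
move=> [_ [_ [_ Hm]]] Hx Hy He ex ey xy.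
have [Ax xx] := Hx; have [Ae ee] := He.
have pr : proj A (x * e).
  split; first by apply: A_mulC => //; apply: esym.
  have -> : x * e * (x * e) = x * (e * x) * e by ncr.
  by rewrite ex !mulrA xx -mulrA ee.
have h1 : sle pos (x * e) x by apply: sub_proj_pos.
have h2 : sle pos (x * e) y by rewrite /sle xy; apply: sub_proj_pos.
have := Hm _ pr h1 h2; rewrite /sle sub0r => H.
exact: (sa_pos_antisym HA (proj_pos pr) H).
Qed.

Lemma ker_trivial (z p q : R) : pos z -> A p -> A q -> commutes z p -> commutes z q ->
  (forall e, proj A e -> commutes e p -> commutes e q -> z * e = 0 -> e = 0) ->
  forall b, A b -> z * b = 0 -> b = 0.
Proof.
move=> Hz Ap Aq zp zq He b Ab zb.
have [o [Ao [oo Ho]]] := sa_carrier HA (posA Hz).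
have Hco : is_carrier A z o by split.
have [ze [_ pe]] := car_props (posA Hz) Hco.
have e0 : 1 - o = 0 := He _ pe (car_comm (posA Hz) Hco Ap zp) (car_comm (posA Hz) Hco Aq zq) ze.
have o1 : o = 1 by apply/eqP; rewrite -subr_eq0 -opprB e0 oppr0.
by have := proj1 (Ho b Ab) zb; rewrite o1 mul1r.
Qed.

End SA.

Theorem theorem7p5 (K : realType) (R : algType K) (A pos : R -> Prop)
  (HA : synaptic_algebra A pos)
  (p q : R) (Hp : proj A p) (Hq : proj A q)
  (Hgen : generic_position A pos p q)
  (c s u v : R)
  (Hc : is_sqrt pos (p * q * p + (1 - p) * (1 - q) * (1 - p)) c)
  (Hs : is_sqrt pos (p * (1 - q) * p + (1 - p) * q * (1 - p)) s)
  (Hu : is_polar_symmetry A pos (p - (1 - q)) u)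
  (Hv : is_polar_symmetry A pos (p - q) v) :
  let j := u * v * p + p * v * u in
  let l := p *+ 2 - 1 in
  (* (i) *)
  (symmetry A j /\ j * p * j = 1 - p) /\
  (* (ii) *)
  (commutes j s /\ commutes j c) /\
  (* (iii) *)
  j = p * j + j * p /\
  (* (iv) *)
  (l = p - (1 - p) /\ l = c * u + s * v /\ symmetry A l /\
   commutes l p /\ commutes l c /\ commutes l s).
Proof.
move=> j l.
have [Ap pp] := Hp; have [Aq qq] := Hq.
have [Hc0 cc] := Hc; have [Hs0 ss] := Hs.
have Ac := posA HA Hc0; have As := posA HA Hs0.
have A1 := A_1 HA.
have pP : forall z, z * p * p = z * p by move=> z; rewrite -mulrA pp.
have qQ : forall z, z * q * q = z * q by move=> z; rewrite -mulrA qq.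
have cc' : c * c = (p - (1 - q)) * (p - (1 - q)) by rewrite cc; pqnorm pp qq pP qQ.
have ss' : s * s = (p - q) * (p - q) by rewrite ss; pqnorm pp qq pP qQ.
have cs1 : c * c + s * s = 1 by rewrite cc ss; pqnorm pp qq pP qQ.
have ccE : c * c = 1 - s * s by rewrite -cs1 addrK.
have ssE : s * s = 1 - c * c by rewrite -cs1 (addrC (c * c)) addrK.
have anti : (p - (1 - q)) * (p - q) = - ((p - q) * (p - (1 - q))) by pqnorm pp qq pP qQ.
have cp : commutes c p by apply: (sqrt_comm HA) => //; rewrite /commutes cc; pqnorm pp qq pP qQ.
have cq : commutes c q by apply: (sqrt_comm HA) => //; rewrite /commutes cc; pqnorm pp qq pP qQ.
have sp : commutes s p by apply: (sqrt_comm HA) => //; rewrite /commutes ss; pqnorm pp qq pP qQ.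
have sq : commutes s q by apply: (sqrt_comm HA) => //; rewrite /commutes ss; pqnorm pp qq pP qQ.
have Aa1 : A (p - (1 - q)) := A_B HA Ap (A_B HA A1 Aq).
have Aa2 : A (p - q) := A_B HA Ap Aq.
have [Au uu a1c a1u] := polar_fact HA Aa1 Hc0 cc' Hu.
have [Av vv a2s a2v] := polar_fact HA Aa2 Hs0 ss' Hv.
have cu : commutes c u by rewrite /commutes -a1c.
have sv : commutes s v by rewrite /commutes -a2s.
have su : commutes s u.
  by apply: (sqrt_comm HA) => //; rewrite ssE; apply: comm_1m; apply: comm_sq.
have cv : commutes c v.
  by apply: (sqrt_comm HA) => //; rewrite ccE; apply: comm_1m; apply: comm_sq.
have cs : commutes c s.
  by apply: (sqrt_comm HA) => //; rewrite ccE; apply: comm_1m; apply: comm_sq.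
have uc' : u * c = c * u by [].
have zuc : forall z, z * u * c = z * c * u by move=> z; rewrite -mulrA -cu mulrA.
have vc' : v * c = c * v by [].
have zvc : forall z, z * v * c = z * c * v by move=> z; rewrite -mulrA -cv mulrA.
have us' : u * s = s * u by [].
have zus : forall z, z * u * s = z * s * u by move=> z; rewrite -mulrA -su mulrA.
have vs' : v * s = s * v by [].
have zvs : forall z, z * v * s = z * s * v by move=> z; rewrite -mulrA -sv mulrA.
have sc' : s * c = c * s by [].
have zsc : forall z, z * s * c = z * c * s by move=> z; rewrite -mulrA -cs mulrA.
have zuu : forall z, z * u * u = z by move=> z; rewrite -mulrA uu mulr1.
have zvv : forall z, z * v * v = z by move=> z; rewrite -mulrA vv mulr1.
have zcc : forall z, z * c * c = z - z * s * s by move=> z; rewrite -mulrA ccE mulrBr mulr1 mulrA.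

have [mpq [mpq' [mp'q mp'q']]] := Hgen.
have pp' : proj A (1 - p).
  split; first exact: (A_B HA A1 Ap).
  by rewrite mulrBr mulr1 mulrBl mul1r pp subrr subr0.
have pq' : proj A (1 - q).
  split; first exact: (A_B HA A1 Aq).
  by rewrite mulrBr mulr1 mulrBl mul1r qq subrr subr0.
have kerc : forall b, A b -> c * b = 0 -> b = 0.
  apply: (ker_trivial HA Hc0 Ap Aq cp cq) => e pe ep eq ce.
  have [Ae ee] := pe.
  have ea1 : commutes e (p - (1 - q)) by apply: comm_B => //; apply: comm_B => //; apply: comm_1.
  have E : (p - (1 - q)) * e * (p - (1 - q)) = 0.
    by rewrite -mulrA ea1 mulrA -cc' -mulrA ce mulr0.
  have [a1e _] := sa_aba0 HA Aa1 (proj_pos HA pe) E.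
  have pe_ : p * e = (1 - q) * e by apply/eqP; rewrite -subr_eq0 -mulrBl a1e.
  have pe0 : p * e = 0 := meet_zero HA mpq' Hp pq' pe ep (comm_B (comm_1 e) eq) pe_.
  have p'e : (1 - p) * e = q * e.
    have -> : (1 - p) * e = q * e + ((1 - q) * e - p * e) by ncr.
    by rewrite pe_ subrr addr0.
  have p'e0 : (1 - p) * e = 0 := meet_zero HA mp'q pp' Hq pe (comm_B (comm_1 e) ep) eq p'e.
  have -> : e = p * e + (1 - p) * e by ncr.
  by rewrite pe0 p'e0 addr0.
have kers : forall b, A b -> s * b = 0 -> b = 0.
  apply: (ker_trivial HA Hs0 Ap Aq sp sq) => e pe ep eq se.
  have [Ae ee] := pe.
  have ea2 : commutes e (p - q) by apply: comm_B.
  have E : (p - q) * e * (p - q) = 0.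
    by rewrite -mulrA ea2 mulrA -ss' -mulrA se mulr0.
  have [a2e _] := sa_aba0 HA Aa2 (proj_pos HA pe) E.
  have pe_ : p * e = q * e by apply/eqP; rewrite -subr_eq0 -mulrBl a2e.
  have pe0 : p * e = 0 := meet_zero HA mpq Hp Hq pe ep eq pe_.
  have p'e : (1 - p) * e = (1 - q) * e.
    have -> : (1 - p) * e = (1 - q) * e + (q * e - p * e) by ncr.
    by rewrite pe_ subrr addr0.
  have p'e0 : (1 - p) * e = 0 :=
    meet_zero HA mp'q' pp' pq' pe (comm_B (comm_1 e) ep) (comm_B (comm_1 e) eq) p'e.
  have -> : e = p * e + (1 - p) * e by ncr.
  by rewrite pe0 p'e0 addr0.
have Aw : A (u * v + v * u) := A_jor HA Au Av.
have sw : commutes s (u * v + v * u) := comm_D (comm_M su sv) (comm_M sv su).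
have csw : c * (s * (u * v + v * u)) = 0.
  have -> : c * (s * (u * v + v * u)) = (c * u) * (s * v) + (s * v) * (c * u) by csn uc' zuc vc' zvc us' zus vs' zvs sc' zsc uu zuu vv zvv uu uu ccE zcc.
  by rewrite -a1c -a2s anti addNr.
have w0 : u * v + v * u = 0 := kers _ Aw (kerc _ (A_mulC HA As Aw sw) csw).
have vu' : v * u = - (u * v) by apply/eqP; rewrite -addr_eq0 addrC w0.
have zvu : forall z, z * v * u = - (z * u * v) by move=> z; rewrite -mulrA vu' mulrN mulrA.
have p2 : p + p = 1 + c * u + s * v by rewrite -a1c -a2s; ncr.
have jE : j = s * u - c * v.
  apply: half_inj; rewrite !mulr2n /j.
  have -> : u * v * p + p * v * u + (u * v * p + p * v * u) = u * v * (p + p) + (p + p) * v * u by ncr.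
  rewrite p2; csn uc' zuc vc' zvc us' zus vs' zvs sc' zsc uu zuu vv zvv vu' zvu ccE zcc.
have Aj : A j by rewrite jE; exact: (A_B HA (A_mulC HA As Au su) (A_mulC HA Ac Av cv)).
have jj : j * j = 1 by rewrite jE; csn uc' zuc vc' zvc us' zus vs' zvs sc' zsc uu zuu vv zvv vu' zvu ccE zcc.
have jpj : j * p * j = 1 - p.
  apply: half_inj; rewrite !mulr2n.
  have -> : j * p * j + j * p * j = j * (p + p) * j by ncr.
  have -> : 1 - p + (1 - p) = 1 + 1 - (p + p) by ncr.
  rewrite p2 jE; csn uc' zuc vc' zvc us' zus vs' zvs sc' zsc uu zuu vv zvv vu' zvu ccE zcc.
have js : commutes j s by rewrite /commutes jE; csn uc' zuc vc' zvc us' zus vs' zvs sc' zsc uu zuu vv zvv vu' zvu ccE zcc.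
have jc : commutes j c by rewrite /commutes jE; csn uc' zuc vc' zvc us' zus vs' zvs sc' zsc uu zuu vv zvv vu' zvu ccE zcc.
have j3 : j = p * j + j * p.
  apply: half_inj; rewrite !mulr2n.
  have -> : p * j + j * p + (p * j + j * p) = (p + p) * j + j * (p + p) by ncr.
  rewrite p2 jE; csn uc' zuc vc' zvc us' zus vs' zvs sc' zsc uu zuu vv zvv vu' zvu ccE zcc.
have l2 : l = p + p - 1 by rewrite /l mulr2n.
split; first by split => //; split.
split; first by split.
split; first exact: j3.
rewrite l2.
split; first by ncr.
split; first by rewrite p2; ncr.
split; first by split; [exact: (A_B HA (A_D HA Ap Ap) A1) | pqnorm pp qq pP qQ].
split; first by rewrite /commutes; pqnorm pp qq pP qQ.
split; apply: comm_sym; apply: comm_B; [apply: comm_D => // | apply: comm_1 | apply: comm_D => // | apply: comm_1].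
Qed.
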